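(* In the Standing Setup with $R=-v(X-w)$ ($v,w\in\mathbb F$), for every $h\in\mathbb Z$: $$d_{h-1}d_h^2d_{h+1}^2d_{h+2}=v^2\bigl(w_h-wv_h+w^2\bigr).$$
   Context: Standing Setup. $\mathbb F$ is a field of characteristic not $2$ or $3$; $f,g\in\mathbb F$; $A=X^3+fX+g\in\mathbb F[X]$; $R\in\mathbb F[X]$ is a polynomial of degree at most $2$; $D=A^2+4R$; $Y$ satisfies $Y^2=D(X)$, $Z=\tfrac12(Y+A)$ and $\overline Z=\tfrac12(-Y+A)$, so $Z+\overline Z=A$ and $Z\overline Z=-R$. We are given sequences $(u_h),(v_h),(w_h),(d_h),(e_h)$ of elements of $\mathbb F$ indexed by $h\in\mathbb Z$, with all $u_h\neq0$, such that for every $h\in\mathbb Z$ the following two identities hold in $\mathbb F[X]$: (i) $A+d_h(X+e_h)+d_{h+1}(X+e_{h+1})=(X+v_h)(X^2-v_hX+w_h)$; (ii) $-u_hu_{h+1}(X^2-v_hX+w_h)(X^2-v_{h+1}X+w_{h+1})=d_{h+1}^2(X+e_{h+1})^2+d_{h+1}(X+e_{h+1})A-R$. (These say that $Z_h=\bigl(Z+d_h(X+e_h)\bigr)/\bigl(u_h(X^2-v_hX+w_h)\bigr)$ are consecutive complete quotients of a continued fraction expansion with partial quotients $(X+v_h)/u_h$.) *)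

(* Defs.v *)
From HB Require Import structures.
From mathcomp Require Import all_boot all_order all_algebra.
Set Implicit Arguments.
Unset Strict Implicit.
Unset Printing Implicit Defensive.

(* Main.v *)
Require Import Defs.
From HB Require Import structures.
From mathcomp Require Import all_boot all_order all_algebra.
From mathcomp Require Import ring.
Import GRing.Theory.
Set Implicit Arguments.
Unset Strict Implicit.
Local Open Scope ring_scope.

Lemma key (F : fieldType) (f g v w d0 d1 d2 d3 v0 v1 v2 w0 w1 w2 e1 e2 : F)
 (He1 : e1 = -(v0+v1)) (He2 : e2 = -(v1+v2))
 (Hw0 : w0 = f + d0 + d1 + v0^+2)
 (Hw1 : w1 = f + d1 + d2 + v1^+2)
 (Hw2 : w2 = f + d2 + d3 + v2^+2)
 (Hg : g + d1 * e1 + d2 * e2 = v1 * w1)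
 (HR2a : w0 + w1 + v0 * v1 = d1 + f)
 (HR2b : w1 + w2 + v1 * v2 = d2 + f)
 (HR3 : - (d2 * (v1 * w2 + v2 * w1)) = 2%:R * d2^+2 * e2 + d2 * (g + e2 * f) + v)
 (HR4 : d2 * (w1 * w2) = d2^+2 * e2^+2 + d2 * e2 * g - v * w) :
 d0 * d1 ^+ 2 * d2 ^+ 2 * d3 = v ^+ 2 * (w1 - w * v1 + w ^+ 2).
Proof.
subst e1 e2 w0 w1 w2.
have Hg' : g = v1 * (f + d1 + d2 + v1 ^+ 2) - d1 * (-(v0+v1)) - d2 * (-(v1+v2)).
  by rewrite -Hg; ring.
subst g.
have Hd0 : d0 = -(d1 + d2 + f + v0^+2 + v0*v1 + v1^+2).
  apply/eqP; rewrite -subr_eq0.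
  have -> : d0 - -(d1 + d2 + f + v0^+2 + v0*v1 + v1^+2) =
    ((f + d0 + d1 + v0 ^+ 2) + (f + d1 + d2 + v1 ^+ 2) + v0 * v1) - (d1 + f) by ring.
  by rewrite HR2a subrr.
have Hd3 : d3 = -(d1 + d2 + f + v2^+2 + v1*v2 + v1^+2).
  apply/eqP; rewrite -subr_eq0.
  have -> : d3 - -(d1 + d2 + f + v2^+2 + v1*v2 + v1^+2) =
    ((f + d1 + d2 + v1 ^+ 2) + (f + d2 + d3 + v2 ^+ 2) + v1 * v2) - (d2 + f) by ring.
  by rewrite HR2b subrr.
have Hv : v = - (d2 * (v1 * (f + d2 + d3 + v2 ^+ 2) + v2 * (f + d1 + d2 + v1 ^+ 2)))
   - (2%:R * d2^+2 * -(v1+v2) + d2 * ((v1 * (f + d1 + d2 + v1 ^+ 2) - d1 * (-(v0+v1)) - d2 * (-(v1+v2))) + -(v1+v2) * f)).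
  by rewrite HR3; ring.
have E3 : v * w = d2 ^+ 2 * (-(v1+v2)) ^+ 2 + d2 * (-(v1+v2)) * (v1 * (f + d1 + d2 + v1 ^+ 2) - d1 * (-(v0+v1)) - d2 * (-(v1+v2))) - d2 * ((f + d1 + d2 + v1 ^+ 2) * (f + d2 + d3 + v2 ^+ 2)).
  by rewrite HR4; ring.
have -> : v ^+ 2 * (f + d1 + d2 + v1 ^+ 2 - w * v1 + w ^+ 2) =
   (v * w) ^+ 2 - v1 * v * (v * w) + v ^+ 2 * (f + d1 + d2 + v1 ^+ 2) by ring.
rewrite E3 Hv Hd3 Hd0; ring.
Qed.

Definition nf (F : fieldType) (c4 c3 c2 c1 c0 : F) : {poly F} :=
  c4%:P * 'X^4 + c3%:P * 'X^3 + c2%:P * 'X^2 + c1%:P * 'X^1 + c0%:P.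

Lemma nf_inj (F : fieldType) (a4 a3 a2 a1 a0 b4 b3 b2 b1 b0 : F) :
  nf a4 a3 a2 a1 a0 = nf b4 b3 b2 b1 b0 ->
  [/\ a4 = b4, a3 = b3, a2 = b2, a1 = b1 & a0 = b0].
Proof.
move=> H.
have c k := congr1 (fun p : {poly F} => p`_k) H.
move: (c 4%N) (c 3%N) (c 2%N) (c 1%N) (c 0%N); rewrite /nf /= !coefE /=.
rewrite !(mulr0, mulr1, addr0, add0r) => -> -> -> -> ->; done.
Qed.

Lemma hi_nf (F : fieldType) (f g a b c dk ek dl el : F) :
  'X^3 + f%:P * 'X + g%:P + dk%:P * ('X + ek%:P) + dl%:P * ('X + el%:P)
     = ('X + a%:P) * ('X^2 - b%:P * 'X + c%:P) ->
  f + dk + dl = c - a * b /\ g + dk * ek + dl * el = a * c /\ 0 = a - b.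
Proof.
move=> H.
have : nf 0 1 0 (f + dk + dl) (g + dk * ek + dl * el) = nf 0 1 (a - b) (c - a * b) (a * c).
  rewrite /nf; apply: (@etrans _ _ ('X^3 + f%:P * 'X + g%:P + dk%:P * ('X + ek%:P) + dl%:P * ('X + el%:P))).
    rewrite !(rmorphD, rmorphM, rmorphB) /= !polyC0 !polyC1; ring.
  rewrite H !(rmorphD, rmorphM, rmorphB) /= !polyC0 !polyC1; ring.
case/nf_inj => _ _ ? ? ?; done.
Qed.

Lemma hii_nf (F : fieldType) (f g v w U a b wa wb dd ee : F) :
  - U%:P * ('X^2 - a%:P * 'X + wa%:P) * ('X^2 - b%:P * 'X + wb%:P)
  = (dd ^+ 2)%:P * ('X + ee%:P) ^+ 2
     + dd%:P * ('X + ee%:P) * ('X^3 + f%:P * 'X + g%:P) - (- v%:P * ('X - w%:P)) ->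
  [/\ - U = dd, U * (a + b) = dd * ee, - U * (wa + wb + a * b) = dd ^+ 2 + dd * f,
      U * (a * wb + b * wa) = 2%:R * dd ^+ 2 * ee + dd * g + dd * ee * f + v
    & - U * (wa * wb) = dd ^+ 2 * ee ^+ 2 + dd * ee * g - v * w].
Proof.
move=> H.
have : nf (- U) (U * (a + b)) (- U * (wa + wb + a * b)) (U * (a * wb + b * wa)) (- U * (wa * wb))
  = nf dd (dd * ee) (dd ^+ 2 + dd * f) (2%:R * dd ^+ 2 * ee + dd * g + dd * ee * f + v)
       (dd ^+ 2 * ee ^+ 2 + dd * ee * g - v * w).
  rewrite /nf; apply: (@etrans _ _ (- U%:P * ('X^2 - a%:P * 'X + wa%:P) * ('X^2 - b%:P * 'X + wb%:P))).
    rewrite !(rmorphD, rmorphM, rmorphB, rmorphN) /=; ring.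
  rewrite H !(rmorphD, rmorphM, rmorphB, rmorphN, rmorphXn) /= ?rmorph_nat; ring.
by case/nf_inj.
Qed.
Lemma chain (T : Type) (a b x y : T) : x = y -> a = x -> y = b -> a = b.
Proof. by move=> -> -> ->. Qed.

Theorem mainTheorem8 (F : fieldType)
  (hchar2 : (2%:R : F) != 0) (hchar3 : (3%:R : F) != 0)
  (f g v w : F) (A R : {poly F})
  (hA : A = 'X^3 + f%:P * 'X + g%:P)
  (hR : R = - v%:P * ('X - w%:P))
  (u vs ws d e : int -> F)
  (hu : forall h : int, u h != 0)
  (hi : forall h : int,
     A + (d h)%:P * ('X + (e h)%:P) + (d (h + 1))%:P * ('X + (e (h + 1))%:P)
     = ('X + (vs h)%:P) * ('X^2 - (vs h)%:P * 'X + (ws h)%:P))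
  (hii : forall h : int,
     - (u h * u (h + 1))%:P * ('X^2 - (vs h)%:P * 'X + (ws h)%:P)
       * ('X^2 - (vs (h + 1))%:P * 'X + (ws (h + 1))%:P)
     = (d (h + 1) ^+ 2)%:P * ('X + (e (h + 1))%:P) ^+ 2
       + (d (h + 1))%:P * ('X + (e (h + 1))%:P) * A - R) :
  forall h : int,
    d (h - 1) * d h ^+ 2 * d (h + 1) ^+ 2 * d (h + 2)
    = v ^+ 2 * (ws h - w * vs h + w ^+ 2).
Proof.
move=> h; subst A R.
have E1 : h - 1 + 1 = h by rewrite subrK.
have E2 : h + 1 + 1 = h + 2 by rewrite -addrA.
have [S1a [_ _]] := hi_nf (hi (h - 1)).
have [S1b [S2b _]] := hi_nf (hi h).
have [S1c [_ _]] := hi_nf (hi (h + 1)).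
have [Ua Ta Qa _ _] := hii_nf (hii (h - 1)).
have [Ub Tb Qb Lb Cb] := hii_nf (hii h).
rewrite E1 in S1a Ua Ta Qa.
rewrite E2 in S1c.
have nza : d h != 0 by rewrite -Ua oppr_eq0 mulf_neq0.
have nzb : d (h + 1) != 0 by rewrite -Ub oppr_eq0 mulf_neq0.
apply: (@key F f g v w (d (h - 1)) (d h) (d (h + 1)) (d (h + 2))
   (vs (h - 1)) (vs h) (vs (h + 1)) (ws (h - 1)) (ws h) (ws (h + 1)) (e h) (e (h + 1))).
- apply: (mulfI nza); rewrite -Ta -Ua; ring.
- apply: (mulfI nzb); rewrite -Tb -Ub; ring.
- rewrite -[ws (h - 1)](subrK (vs (h - 1) * vs (h - 1))) -S1a; ring.
- rewrite -[ws h](subrK (vs h * vs h)) -S1b; ring.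
- rewrite -[ws (h + 1)](subrK (vs (h + 1) * vs (h + 1))) -S1c; ring.
- by rewrite S2b; ring.
- apply: (mulfI nza); rewrite (_ : d h * (d h + f) = d h ^+ 2 + d h * f); last ring.
  rewrite -Qa -Ua; ring.
- apply: (mulfI nzb); rewrite (_ : d (h + 1) * (d (h + 1) + f) = d (h + 1) ^+ 2 + d (h + 1) * f); last ring.
  rewrite -Qb -Ub; ring.
- rewrite -Ub in Lb *; apply: (chain Lb); ring.
- rewrite -Ub in Cb *; apply: (chain Cb); ring.
Qed.
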